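(* The Euler characteristic $\chi$ is a ring homomorphism from the strong ring $(\mathcal{G},\oplus,\boxtimes)$ to $\mathbb{Z}$; that is, $\chi(0)=0$, $\chi(K_1)=1$, $\chi(G\oplus H)=\chi(G)+\chi(H)$ and $\chi(G\boxtimes H)=\chi(G)\chi(H)$ for all $G,H\in\mathcal{G}$.
   Context: Graphs are finite simple graphs up to isomorphism. $G\oplus H$ is the disjoint union. The strong product $G\boxtimes H$ of $G=(V,E)$, $H=(W,F)$ has vertex set $V\times W$, distinct $(a,b),(c,d)$ adjacent iff ($a=c$ and $\{b,d\}\in F$) or ($b=d$ and $\{a,c\}\in E$) or ($\{a,c\}\in E$ and $\{b,d\}\in F$). $\mathcal{G}$ is the Grothendieck group of the monoid (graphs, $\oplus$), elements $A-B$ with $A-B=C-D$ iff $A\oplus D\oplus K=B\oplus C\oplus K$ for some graph $K$; the strong ring is $\mathcal{G}$ with $\boxtimes$ extended bilinearly, zero the empty graph and one $K_1$. For a graph $G$, $\chi(G)=\sum_{k\ge0}(-1)^k v_k(G)$ where $v_k(G)$ is the number of complete subgraphs $K_{k+1}$ of $G$, and $\chi(A-B)=\chi(A)-\chi(B)$. *)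

(* Defs.v *)
From HB Require Import structures.
From mathcomp Require Import all_boot all_order all_algebra.
Import Order.TTheory GRing.Theory Num.Theory.

Record graph : Type := Graph {
  gV : finType;
  gadj : rel gV;
  gsym : symmetric gadj;
  girr : irreflexive gadj }.

Definition giso (G H : graph) : Prop :=
  exists f : gV G -> gV H, bijective f /\ forall x y, gadj H (f x) (f y) = gadj G x y.

Definition empty_graph : graph :=
  @Graph void (fun _ _ => false) (fun _ _ => erefl) (fun _ => erefl).
Definition K1 : graph :=
  @Graph unit (fun _ _ => false) (fun _ _ => erefl) (fun _ => erefl).

Definition dunion_adj (G H : graph) : rel (gV G + gV H)%type :=
  fun x y => match x, y with
             | inl a, inl b => gadj G a b
             | inr a, inr b => gadj H a b
             | _, _ => false end.

Lemma dunion_sym G H : symmetric (dunion_adj G H).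
Proof. by case=> a [] b //=; apply: gsym. Qed.

Lemma dunion_irr G H : irreflexive (dunion_adj G H).
Proof. by case=> a /=; apply: girr. Qed.

Definition dunion (G H : graph) : graph :=
  @Graph (gV G + gV H)%type (dunion_adj G H) (@dunion_sym G H) (@dunion_irr G H).

Definition sprod_adj (G H : graph) : rel (gV G * gV H)%type :=
  fun x y => [|| (x.1 == y.1) && gadj H x.2 y.2,
                 (x.2 == y.2) && gadj G x.1 y.1
               | gadj G x.1 y.1 && gadj H x.2 y.2].

Lemma sprod_sym G H : symmetric (sprod_adj G H).
Proof.
by case=> a b [c d]; rewrite /sprod_adj /= (eq_sym a) (eq_sym b) (gsym G a) (gsym H b).
Qed.

Lemma sprod_irr G H : irreflexive (sprod_adj G H).
Proof. by case=> a b; rewrite /sprod_adj /= !girr !andbF. Qed.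

Definition sprod (G H : graph) : graph :=
  @Graph (gV G * gV H)%type (sprod_adj G H) (@sprod_sym G H) (@sprod_irr G H).

Definition is_clique (G : graph) (S : {set gV G}) : bool :=
  [forall x in S, forall y in S, (x != y) ==> gadj G x y].

Definition vk (G : graph) (k : nat) : nat :=
  #|[set S : {set gV G} | is_clique G S & #|S| == k.+1]|.

(* chi(G) = sum_{k>=0} (-1)^k v_k(G); v_k = 0 for k >= #|V|, so the sum is finite. *)
Definition chi (G : graph) : int :=
  (\sum_(k < #|gV G|) (-1) ^+ k * (vk G k)%:Z)%R.

(* Grothendieck group: formal differences A - B represented by pairs (A, B). *)
Definition gdiff : Type := (graph * graph)%type.

Definition grot_eq (x y : gdiff) : Prop :=
  exists K : graph,
    giso (dunion (dunion x.1 y.2) K) (dunion (dunion x.2 y.1) K).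

Definition gzero : gdiff := (empty_graph, empty_graph).
Definition gone : gdiff := (K1, empty_graph).
Definition gadd (x y : gdiff) : gdiff := (dunion x.1 y.1, dunion x.2 y.2).
(* (A - B)(C - D) = (AC + BD) - (AD + BC), strong product extended bilinearly *)
Definition gmul (x y : gdiff) : gdiff :=
  (dunion (sprod x.1 y.1) (sprod x.2 y.2), dunion (sprod x.1 y.2) (sprod x.2 y.1)).

Definition chiG (x : gdiff) : int := (chi x.1 - chi x.2)%R.

(* Main.v *)
Require Import Defs.
From mathcomp Require Import all_boot all_order all_algebra zify ring.
Import GRing.Theory.
Local Open Scope ring_scope.
Set Warnings "-notation-overridden,-ambiguous-paths".

Definition ee {T : finType} (A : {set T}) : int := (A == set0)%:R.
Definition ss {T : finType} (A : {set T}) : int := (-1) ^+ #|A|.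

Lemma sum_sub_sign (T : finType) (C : {set T}) :
  \sum_(S : {set T} | S \subset C) (-1 : int) ^+ #|S| = (C == set0)%:R.
Proof.
have [->|[x xC]] := set_0Vmem C.
  rewrite eqxx (big_pred1 set0) ?cards0 // => S; by rewrite subset0.
have -> : (C == set0) = false by apply/negbTE/set0Pn; exists x.
set t := fun S : {set T} => if x \in S then S :\ x else x |: S.
have tK : involutive t.
  move=> S; rewrite /t; case: (boolP (x \in S)) => xS.
    by rewrite setD11 setD1K.
  by rewrite setU11 setU1K.
set s := (X in X = _).
have : s = - s.
  rewrite {1}/s (reindex_inj (inv_inj tK)) /= -sumrN.
  apply: eq_big => S.
    rewrite /t; case: (boolP (x \in S)) => xS.
      apply/idP/idP => H; last exact: subset_trans (subD1set _ _) H.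
      by rewrite -(setD1K xS) subUset sub1set xC.
    by rewrite subUset sub1set xC.
  move=> _; rewrite /t; case: (boolP (x \in S)) => xS.
    by rewrite [in RHS](cardsD1 x) xS exprS mulN1r opprK.
  by rewrite cardsU1 xS exprS mulN1r.
move=> h; rewrite /= -/s; lia.
Qed.

Section Proj.
Variables X Y : finType.
Definition hh (A : {set X}) (B : {set Y}) : int :=
  \sum_(S : {set X * Y} | (fst @: S == A) && (snd @: S == B)) (-1) ^+ #|S|.
Definition phi (A : {set X}) (B : {set Y}) : int :=
  ee A * ee B - (ss A - ee A) * (ss B - ee B).

Lemma subX_proj (S : {set X * Y}) (A : {set X}) (B : {set Y}) :
  (S \subset setX A B) = (fst @: S \subset A) && (snd @: S \subset B).
Proof.
apply/idP/andP.
  move/subsetP=> H; split; apply/subsetP=> z /imsetP [p pS ->];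
  by case: p pS => a b pS; move: (H _ pS); rewrite in_setX => /andP[].
case=> /subsetP H1 /subsetP H2; apply/subsetP => p pS.
by case: p pS => a b pS; rewrite in_setX H1 ?H2 //; apply/imsetP; exists (a, b).
Qed.

Lemma setX_eq0 (A : {set X}) (B : {set Y}) :
  (setX A B == set0) = (A == set0) || (B == set0).
Proof. by rewrite -!cards_eq0 cardsX muln_eq0. Qed.

Lemma zeta_hh (A : {set X}) (B : {set Y}) :
  \sum_(A' : {set X} | A' \subset A) \sum_(B' : {set Y} | B' \subset B) hh A' B'
  = ((A == set0) || (B == set0))%:R.
Proof.
rewrite -setX_eq0 -sum_sub_sign pair_big /=.
rewrite [RHS](partition_big (fun S : {set X * Y} => (fst @: S, snd @: S))
          (fun p : {set X} * {set Y} => (p.1 \subset A) && (p.2 \subset B))) /=;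
  last by move=> S; rewrite subX_proj.
apply: eq_bigr => -[A' B'] /= /andP[HA HB]; apply: eq_bigl => S.
rewrite xpair_eqE subX_proj.
by case: eqP => [->|]; case: eqP => [->|] //=; rewrite ?HA ?HB ?andbF. 
Qed.

Lemma sum_ee (T : finType) (A : {set T}) :
  \sum_(A' : {set T} | A' \subset A) ee A' = 1.
Proof.
rewrite (bigD1 set0) ?sub0set //= /ee eqxx big1 ?addr0 // => S /andP[_ /negbTE ->].
by [].
Qed.

Lemma zeta_phi (A : {set X}) (B : {set Y}) :
  \sum_(A' : {set X} | A' \subset A) \sum_(B' : {set Y} | B' \subset B) phi A' B'
  = ((A == set0) || (B == set0))%:R.
Proof.
rewrite /phi.
have E : forall (T : finType) (F : {set T} -> int) (G : {set Y} -> int) (C : {set T}),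
  \sum_(A' : {set T} | A' \subset C) \sum_(B' : {set Y} | B' \subset B) F A' * G B' =
  (\sum_(A' : {set T} | A' \subset C) F A') * (\sum_(B' : {set Y} | B' \subset B) G B').
  by move=> T F G C; rewrite mulr_suml; apply: eq_bigr => i _; rewrite mulr_sumr.
under eq_bigr do rewrite sumrB.
rewrite sumrB !E !sum_ee !sumrB !sum_ee.
rewrite /ss !sum_sub_sign.
by case: (A == set0); case: (B == set0).
Qed.

Lemma hh_phi_aux n : forall (A : {set X}) (B : {set Y}), (#|A| + #|B| < n)%N -> hh A B = phi A B.
Proof.
elim: n => [//|n IH] A B Hn.
have Z := zeta_hh A B; rewrite -(zeta_phi A B) !pair_big /= in Z.
rewrite (bigD1 (A, B)) /= ?subxx // [in RHS](bigD1 (A, B)) /= ?subxx // in Z.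
move: Z; set s1 := (X in _ + X = _); set s2 := (X in _ = _ + X).
have -> : s1 = s2.
  apply: eq_bigr => -[A' B'] /= /andP[/andP[HA HB] Hne]; apply: IH.
  have cA := subset_leq_card HA; have cB := subset_leq_card HB.
  case: (eqVneq A' A) => [eA|nA].
    subst A'; have : B' \proper B by rewrite properEneq HB andbT; move: Hne; rewrite xpair_eqE eqxx.
    move/proper_card; lia.
  have : A' \proper A by rewrite properEneq HA nA.
  move/proper_card; lia.
by move/addIr.
Qed.

Lemma hh_phi (A : {set X}) (B : {set Y}) : hh A B = phi A B.
Proof. exact: (@hh_phi_aux (#|A| + #|B|).+1). Qed.
End Proj.
Arguments phi {X Y}.
Arguments hh {X Y}.


Definition gg (G : graph) : int := \sum_(S : {set gV G} | is_clique G S) ss S.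

Lemma is_cliqueP (G : graph) (S : {set gV G}) :
  reflect (forall x y, x \in S -> y \in S -> x != y -> gadj G x y) (is_clique G S).
Proof.
apply: (iffP forallP) => [H x y xS yS nxy | H x].
  by move: (H x); rewrite xS /= => /forallP /(_ y); rewrite yS nxy.
apply/implyP => xS; apply/forallP => y; apply/implyP => yS; apply/implyP.
exact: H.
Qed.

Lemma clique0 (G : graph) : is_clique G set0.
Proof. by apply/is_cliqueP => x y; rewrite inE. Qed.

Lemma sum_prod (I J : finType) (P : pred I) (Q : pred J) (F : I -> int) (G : J -> int) :
  \sum_(i | P i) \sum_(j | Q j) F i * G j = (\sum_(i | P i) F i) * (\sum_(j | Q j) G j).
Proof. by rewrite mulr_suml; apply: eq_bigr => i _; rewrite mulr_sumr. Qed.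

Lemma sum_cl_ee (G : graph) : \sum_(S : {set gV G} | is_clique G S) ee S = 1.
Proof.
rewrite (bigD1 set0) ?clique0 //= /ee eqxx big1 ?addr0 // => S /andP[_ /negbTE ->].
by [].
Qed.

Lemma sum_cl_eess (G : graph) : \sum_(S : {set gV G} | is_clique G S) ee S * ss S = 1.
Proof.
rewrite (bigD1 set0) ?clique0 //= /ee /ss eqxx cards0 big1 ?addr0 ?mulr1 //.
by move=> S /andP[_ /negbTE ->]; rewrite mul0r.
Qed.

Lemma clique_sprod (G H : graph) (S : {set gV (sprod G H)}) :
  is_clique (sprod G H) S = is_clique G (fst @: S) && is_clique H (snd @: S).
Proof.
apply/is_cliqueP/andP.
  move=> Hc; split; apply/is_cliqueP => x y /imsetP [p pS ->] /imsetP [q qS ->] ne.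
    have pq : p != q by apply: contraNneq ne => ->.
    move: (Hc p q pS qS pq); rewrite /= /sprod_adj (negbTE ne) /=.
    by case/orP => /andP[].
  have pq : p != q by apply: contraNneq ne => ->.
  move: (Hc p q pS qS pq); rewrite /= /sprod_adj (negbTE ne) /=.
  by case/orP => /andP[].
case=> /is_cliqueP H1 /is_cliqueP H2 p q pS qS pq.
have m1 : p.1 \in fst @: S by apply/imsetP; exists p.
have m2 : p.2 \in snd @: S by apply/imsetP; exists p.
have n1 : q.1 \in fst @: S by apply/imsetP; exists q.
have n2 : q.2 \in snd @: S by apply/imsetP; exists q.
rewrite /= /sprod_adj.
case: (eqVneq p.1 q.1) => e1; case: (eqVneq p.2 q.2) => e2 /=.
- by move: pq; case: p q e1 e2 {pS qS m1 m2 n1 n2} => a b [c d] /= -> ->; rewrite eqxx.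
- by rewrite H2.
- by rewrite H1.
- by rewrite H1 ?H2.
Qed.

Lemma gg_sprod (G H : graph) : gg (sprod G H) = gg G + gg H - gg G * gg H.
Proof.
rewrite /gg.
under eq_bigl do rewrite clique_sprod.
rewrite (partition_big (fun S : {set gV G * gV H} => (fst @: S, snd @: S))
   (fun p : {set gV G} * {set gV H} => is_clique G p.1 && is_clique H p.2)) //=.
transitivity (\sum_(p : {set gV G} * {set gV H} | is_clique G p.1 && is_clique H p.2) phi p.1 p.2).
  apply: eq_bigr => -[A B] /= /andP[HA HB]; rewrite -hh_phi /hh; apply: eq_bigl => S.
  rewrite xpair_eqE.
  by case: eqP => [->|]; case: eqP => [->|] //=; rewrite ?HA ?HB ?andbF.
rewrite -(pair_big (fun A : {set gV G} => is_clique G A) (fun B : {set gV H} => is_clique H B)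
  (fun A B => phi A B)) /=.
rewrite /phi; under eq_bigr do rewrite sumrB.
rewrite sumrB !sum_prod.
rewrite !sumrB !sum_cl_ee.
ring.
Qed.

Definition uset (G H : graph) (p : {set gV G} * {set gV H}) : {set gV (dunion G H)} :=
  [set x | match x with inl a => a \in p.1 | inr b => b \in p.2 end].
Definition usplit (G H : graph) (S : {set gV (dunion G H)}) : {set gV G} * {set gV H} :=
  ([set a | (inl a : gV (dunion G H)) \in S], [set b | (inr b : gV (dunion G H)) \in S]).

Lemma card_uset (G H : graph) p : #|uset G H p| = (#|p.1| + #|p.2|)%N.
Proof.
have -> : uset G H p = (inl @: p.1) :|: (inr @: p.2).
  apply/setP => -[a|b]; rewrite !inE /=.
    rewrite (mem_imset _ _ (@inl_inj _ _)).
    by case: (boolP (inl a \in _)) => [/imsetP [? ? //]|]; rewrite orbF.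
  rewrite (mem_imset _ _ (@inr_inj _ _)).
  by case: (boolP (inr b \in _)) => [/imsetP [? ? //]|].
rewrite cardsU !card_imset; try exact: inl_inj; try exact: inr_inj.
suff -> : inl @: p.1 :&: inr @: p.2 = set0 by rewrite cards0 subn0.
apply/setP => x; rewrite !inE.
by apply/andP => -[/imsetP [a _ ->] /imsetP [b _]].
Qed.

Lemma clique_uset (G H : graph) p :
  is_clique (dunion G H) (uset G H p) =
  [&& is_clique G p.1, is_clique H p.2 & (p.1 == set0) || (p.2 == set0)].
Proof.
case: p => A B /=.
apply/is_cliqueP/and3P.
  move=> Hc; split.
  - apply/is_cliqueP => x y xA yA nxy.
    have := Hc (inl x) (inl y); rewrite !inE; apply => //; by apply: contraNneq nxy => -[].
  - apply/is_cliqueP => x y xA yA nxy.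
    have := Hc (inr x) (inr y); rewrite !inE; apply => //; by apply: contraNneq nxy => -[].
  - case: (set_0Vmem A) => [->|[a aA]]; first by rewrite eqxx.
    case: (set_0Vmem B) => [->|[b bB]]; first by rewrite eqxx orbT.
    by have := Hc (inl a) (inr b); rewrite !inE => /(_ aA bB isT).
case=> /is_cliqueP H1 /is_cliqueP H2 E [a|b] [c|d]; rewrite !inE //=.
- move=> aA cA ne; apply: H1 => //; by apply: contraNneq ne => ->.
- move=> aA dB _; move: E; case: eqP => [eA|_]; first by move: aA; rewrite eA inE.
  by move=> /eqP eB; move: dB; rewrite eB inE.
- move=> bB cA _; move: E; case: eqP => [eA|_]; first by move: cA; rewrite eA inE.
  by move=> /eqP eB; move: bB; rewrite eB inE.
- move=> bB dB ne; apply: H2 => //; by apply: contraNneq ne => ->.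
Qed.

Lemma gg_dunion (G H : graph) : gg (dunion G H) = gg G + gg H - 1.
Proof.
rewrite /gg (reindex (uset G H)) /=; last first.
  exists (usplit G H) => [[A B] _|S _].
    by congr pair; apply/setP => x; rewrite !inE.
  by apply/setP => -[a|b]; rewrite !inE.
under eq_bigl do rewrite clique_uset andbA.
rewrite big_mkcondr /= -(pair_big (fun A : {set gV G} => is_clique G A) (fun B : {set gV H} => is_clique H B)
  (fun A B => if (A == set0) || (B == set0) then ss (uset G H (A, B)) else 0)) /=.
transitivity (\sum_(A : {set gV G} | is_clique G A) \sum_(B : {set gV H} | is_clique H B)
   ((ee A * ss A) * ss B + ss A * (ee B * ss B) - (ee A * ss A) * (ee B * ss B))).
  apply: eq_bigr => A _; apply: eq_bigr => B _.
  rewrite /ss card_uset exprD /ee /=.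
  case: eqP => [->|_]; case: eqP => [->|_]; rewrite ?cards0 /=; ring.
rewrite (eq_bigr (fun A => \sum_(B : {set gV H} | is_clique H B) (ee A * ss A * ss B)
   + \sum_(B : {set gV H} | is_clique H B) (ss A * (ee B * ss B))
   - \sum_(B : {set gV H} | is_clique H B) (ee A * ss A * (ee B * ss B)))); last first.
  by move=> A _; rewrite -big_split -sumrB.
rewrite sumrB big_split /= !sum_prod !sum_cl_eess.
ring.
Qed.

Lemma gg_iso (G H : graph) : giso G H -> gg G = gg H.
Proof.
case=> f [fbij Hadj]; have finj := bij_inj fbij.
case: fbij => finv fK finvK.
have cl : forall S : {set gV G}, is_clique H (f @: S) = is_clique G S.
  move=> S; apply/is_cliqueP/is_cliqueP.
    move=> Hc x y xS yS nxy; rewrite -Hadj; apply: Hc; rewrite ?imset_f //.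
    by rewrite (inj_eq finj).
  move=> Hc _ _ /imsetP[x xS ->] /imsetP[y yS ->] ne; rewrite Hadj; apply: Hc => //.
  by apply: contraNneq ne => ->.
rewrite /gg [RHS](reindex (fun S : {set gV G} => f @: S)) /=; last first.
  exists (fun S : {set gV H} => finv @: S) => S _; rewrite -imset_comp.
    by rewrite (@eq_imset _ _ _ id) ?imset_id // => x /=; rewrite fK.
  by rewrite (@eq_imset _ _ _ id) ?imset_id // => x /=; rewrite finvK.
apply: eq_big => S; first by rewrite cl.
by move=> _; rewrite /ss card_imset.
Qed.

Lemma chi_g (G : graph) : chi G = 1 - gg G.
Proof.
set n := #|gV G|.
have E : gg G = \sum_(k < n.+1) (-1)^+k * (#|[set S : {set gV G} | is_clique G S & #|S| == k]|)%:Z.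
  rewrite /gg.
  transitivity (\sum_(S | is_clique G S) \sum_(k < n.+1) (if #|S| == k then (-1)^+k else 0 : int)).
    apply: eq_bigr => S _.
    have lt : (#|S| < n.+1)%N by rewrite ltnS max_card.
    rewrite (bigD1 (Ordinal lt)) //= eqxx big1 ?addr0 // => k nk.
    case: eqP => // e; case/eqP: nk; apply: val_inj; by rewrite /= e.
  rewrite exchange_big /=; apply: eq_bigr => k _.
  rewrite -big_mkcondr /=.
  rewrite (eq_bigl (fun S => S \in [set S : {set gV G} | is_clique G S & #|S| == k])); last first.
    by move=> S; rewrite inE.
  by rewrite sumr_const -mulr_natr natz.
rewrite E big_ord_recl /=.
have -> : [set S : {set gV G} | is_clique G S & #|S| == 0%N] = [set set0].
  apply/setP => S; rewrite !inE cards_eq0.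
  by case: eqP => [->|]; rewrite ?clique0 ?andbF.
rewrite cards1 /chi expr0 mul1r opprD addrA subrr add0r -sumrN.
apply: eq_bigr => i _; rewrite /vk exprS mulN1r mulNr opprK.
by [].
Qed.

Lemma chi_empty : chi empty_graph = 0.
Proof.
rewrite chi_g /gg (bigD1 set0) ?clique0 //= big1 ?addr0 /ss ?cards0 ?subrr //.
move=> S /andP[_ /set0Pn [[]]].
Qed.

Lemma chi_K1 : chi K1 = 1.
Proof.
have clT : is_clique K1 [set: unit].
  by apply/is_cliqueP => -[] -[].
rewrite chi_g /gg (bigD1 set0) ?clique0 //= (bigD1 [set: unit]) //=; last first.
  by rewrite clT; apply/eqP => /setP /(_ tt); rewrite !inE.
rewrite big1 ?addr0 /ss ?cards0 ?cardsT ?card_unit //.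
move=> S; rewrite -!andbA => /and3P[_ n0 nT].
case: (boolP (tt \in S)) => h.
  by case/eqP: nT; apply/setP => -[]; rewrite inE h.
by case/eqP: n0; apply/setP => -[]; rewrite inE (negbTE h).
Qed.

Lemma chi_dunion G H : chi (dunion G H) = chi G + chi H.
Proof. rewrite !chi_g gg_dunion; ring. Qed.

Lemma chi_sprod G H : chi (sprod G H) = chi G * chi H.
Proof. rewrite !chi_g gg_sprod; ring. Qed.

Lemma chi_iso G H : giso G H -> chi G = chi H.
Proof. by move=> /gg_iso h; rewrite !chi_g h. Qed.

Theorem mainTheorem3 :
  (forall x y : gdiff, grot_eq x y -> chiG x = chiG y) /\
  chiG gzero = 0 /\
  chiG gone = 1 /\
  (forall x y : gdiff, chiG (gadd x y) = chiG x + chiG y) /\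
  (forall x y : gdiff, chiG (gmul x y) = chiG x * chiG y).
Proof.
split.
  move=> [a b] [c d] [K /chi_iso]; rewrite /chiG /= !chi_dunion => h.
  have : chi a + chi d = chi b + chi c by move/addIr: h.
  move=> h2; lia.
split; first by rewrite /chiG subrr.
split; first by rewrite /chiG /= chi_K1 chi_empty subr0.
split.
  move=> [a b] [c d]; rewrite /chiG /= !chi_dunion; ring.
move=> [a b] [c d]; rewrite /chiG /= !chi_dunion !chi_sprod; ring.
Qed.
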